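(* There exists a countable two-dimensional subshift of finite type $X$ that has infinitely many periodic points and whose subpattern poset $(X/\!\approx, \succcurlyeq)$ contains an infinite antichain.
   Context: A two-dimensional SFT is the set of configurations in $S^{\mathbb{Z}^2}$ ($S$ finite) avoiding a finite set of forbidden finite patterns. For configurations $x,y$, $x \succcurlyeq y$ means every finite pattern occurring in $y$ also occurs in $x$; $x \approx y$ means $x \succcurlyeq y$ and $y \succcurlyeq x$. The subpattern poset of $X$ is $(X/\!\approx, \succcurlyeq)$. An antichain is a set of pairwise incomparable elements. *)

(* Defs.v *)
From Stdlib Require Import ZArith List.
From mathcomp Require Import all_boot.
Open Scope Z_scope.

Definition config (S : Type) := Z -> Z -> S.

Definition pattern (S : Type) := list ((Z * Z) * S).

Definition occurs {S : Type} (p : pattern S) (x : config S) : Prop :=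
  exists v1 v2 : Z, forall e, List.In e p ->
    x (fst (fst e) + v1) (snd (fst e) + v2) = snd e.

Definition in_SFT {S : Type} (F : list (pattern S)) (x : config S) : Prop :=
  forall p, List.In p F -> ~ occurs p x.

(* x ≽ y : every finite pattern occurring in y occurs in x. *)
Definition subpat {S : Type} (x y : config S) : Prop :=
  forall p : pattern S, occurs p y -> occurs p x.

Definition config_eq {S : Type} (x y : config S) : Prop :=
  forall i j, x i j = y i j.

(* Periodic point: finite orbit under Z^2 shifts, i.e. nonzero periods in
   both coordinate directions. *)
Definition periodic {S : Type} (x : config S) : Prop :=
  exists p q : Z, p <> 0 /\ q <> 0 /\
    forall i j, x (i + p) j = x i j /\ x i (j + q) = x i j.

Definition countable_set {S : Type} (X : config S -> Prop) : Prop :=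
  exists f : nat -> config S, forall x, X x -> exists n, config_eq (f n) x.

(* Main.v *)
Require Import Defs.
From Stdlib Require Import ZArith List Lia Classical ClassicalEpsilon Wf_nat.
From mathcomp Require Import all_boot.
From HB Require Import structures.


Inductive sym := sC | sH | sV | sD | sA | sB.
Definition sym2o (s : sym) : 'I_6 := match s with sC=>inord 0%N|sH=>inord 1%N|sV=>inord 2%N|sD=>inord 3%N|sA=>inord 4%N|sB=>inord 5%N end.
Definition o2sym (n : 'I_6) : sym := match val n with 0%N=>sC|1%N=>sH|2%N=>sV|3%N=>sD|4%N=>sA|_=>sB end.
Lemma symK : cancel sym2o o2sym. Proof. by case; rewrite /o2sym /= inordK. Qed.
HB.instance Definition _ := Finite.copy sym (can_type symK).

Definition isCH s := match s with sC|sH => true | _ => false end.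
Definition isCV s := match s with sC|sV => true | _ => false end.
Definition isCD s := match s with sC|sD => true | _ => false end.
Definition hok a b : bool := match a with
 | sC | sH => isCH b
 | sV | sA => match b with sA|sD => true | _ => false end
 | sD | sB => match b with sB|sV => true | _ => false end end.
Definition vok a b : bool := match a with
 | sC | sV => isCV b
 | sH | sB => match b with sB|sD => true | _ => false end
 | sD | sA => match b with sA|sH => true | _ => false end end.
Definition dok a b : bool := Bool.eqb (isCD a) (isCD b).

Definition syms : list sym := sC :: sH :: sV :: sD :: sA :: sB :: nil.
Definition allpairs := list_prod syms syms.
Definition hpat (ab : sym*sym) : pattern sym := ((0,0),fst ab)::((1,0),snd ab)::nil.
Definition vpat (ab : sym*sym) : pattern sym := ((0,0),fst ab)::((0,1),snd ab)::nil.
Definition dpat (ab : sym*sym) : pattern sym := ((0,0),fst ab)::((1,1),snd ab)::nil.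
Definition Fb : list (pattern sym) :=
  List.map hpat (List.filter (fun ab => negb (hok (fst ab) (snd ab))) allpairs) ++
  List.map vpat (List.filter (fun ab => negb (vok (fst ab) (snd ab))) allpairs) ++
  List.map dpat (List.filter (fun ab => negb (dok (fst ab) (snd ab))) allpairs).

Definition LR (x : config sym) := forall i j,
  hok (x i j) (x (i+1) j) = true /\ vok (x i j) (x i (j+1)) = true /\
  dok (x i j) (x (i+1) (j+1)) = true.

Lemma all_in ab : List.In ab allpairs.
Proof. destruct ab as [a b]; apply in_prod; [destruct a|destruct b]; simpl; tauto. Qed.

Lemma LR_SFT x : LR x -> in_SFT Fb x.
Proof.
  intros HL p Hp [v1 [v2 Hocc]].
  apply in_app_iff in Hp as [Hp|Hp]; [| apply in_app_iff in Hp as [Hp|Hp]];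
  apply in_map_iff in Hp as [[a b] [<- Hf]]; apply filter_In in Hf as [_ Hf];
  pose proof (Hocc _ (or_introl erefl)) as h1; pose proof (Hocc _ (or_intror (or_introl erefl))) as h2;
  cbn [fst snd hpat vpat dpat] in h1, h2; rewrite ?Z.add_0_l in h1, h2; destruct (HL v1 v2) as [H1 [H2 H3]].
  - rewrite (Z.add_comm 1 v1) in h2; rewrite h1 h2 in H1. simpl in Hf. rewrite H1 in Hf. discriminate.
  - rewrite (Z.add_comm 1 v2) in h2; rewrite h1 h2 in H2. simpl in Hf. rewrite H2 in Hf. discriminate.
  - rewrite (Z.add_comm 1 v1) (Z.add_comm 1 v2) in h2; rewrite h1 h2 in H3. simpl in Hf. rewrite H3 in Hf. discriminate.
Qed.

Lemma SFT_LR x : in_SFT Fb x -> LR x.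
Proof.
  intros HS i j. split; [|split].
  - destruct (hok (x i j) (x (i+1) j)) eqn:E; [reflexivity|exfalso].
    apply (HS (hpat (x i j, x (i+1) j))).
    + apply in_app_iff; left; apply in_map_iff; eexists; split; [reflexivity|].
      apply filter_In; split; [apply all_in| simpl; rewrite E; reflexivity].
    + exists i, j; intros e [<-|[<-|[]]]; cbn [fst snd]; rewrite ?Z.add_0_l ?(Z.add_comm 1 i) ?(Z.add_comm 1 j); reflexivity.
  - destruct (vok (x i j) (x i (j+1))) eqn:E; [reflexivity|exfalso].
    apply (HS (vpat (x i j, x i (j+1)))).
    + apply in_app_iff; right; apply in_app_iff; left; apply in_map_iff; eexists; split; [reflexivity|].
      apply filter_In; split; [apply all_in| simpl; rewrite E; reflexivity].
    + exists i, j; intros e [<-|[<-|[]]]; cbn [fst snd]; rewrite ?Z.add_0_l ?(Z.add_comm 1 i) ?(Z.add_comm 1 j); reflexivity.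
  - destruct (dok (x i j) (x (i+1) (j+1))) eqn:E; [reflexivity|exfalso].
    apply (HS (dpat (x i j, x (i+1) (j+1)))).
    + apply in_app_iff; right; apply in_app_iff; right; apply in_map_iff; eexists; split; [reflexivity|].
      apply filter_In; split; [apply all_in| simpl; rewrite E; reflexivity].
    + exists i, j; intros e [<-|[<-|[]]]; cbn [fst snd]; rewrite ?Z.add_0_l ?(Z.add_comm 1 i) ?(Z.add_comm 1 j); reflexivity.
Qed.


Lemma Zall (Q : Z -> Prop) : Q 0 -> (forall i, Q i <-> Q (i+1)) -> forall i, Q i.
Proof.
  intros H0 H i. induction i using Z.peano_ind; auto.
  - rewrite <- Z.add_1_r. apply (proj1 (H i)); auto.
  - apply (proj2 (H (Z.pred i))). replace (Z.pred i + 1) with i by lia. auto.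
Qed.

Lemma Zshift (P : Z -> bool) : (forall i, P (i+1) = P i) -> forall i, P i = P 0.
Proof. intros H. apply Zall; [reflexivity|]. intro i; rewrite H; tauto. Qed.

Lemma hok_CH a b : hok a b = true -> isCH b = isCH a. Proof. by destruct a, b. Qed.
Lemma vok_CV a b : vok a b = true -> isCV b = isCV a. Proof. by destruct a, b. Qed.

Section S.
Variable x : config sym.
Hypothesis HL : LR x.

Lemma rowCH i j : isCH (x i j) = isCH (x 0 j).
Proof. apply (Zshift (fun i => isCH (x i j))); intro k; apply hok_CH, HL. Qed.
Lemma colCV i j : isCV (x i j) = isCV (x i 0).
Proof. apply (Zshift (fun j => isCV (x i j))); intro k; apply vok_CV, HL. Qed.
Lemma diagCD i j : isCD (x i j) = isCD (x (i-j) 0).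
Proof.
  have H := Zshift (fun t => isCD (x (i-j+t) t)).
  have := H _ j. replace (i - j + j) with i by lia. rewrite Z.add_0_r. apply.
  intro t. replace (i - j + (t+1)) with (i-j+t+1) by lia.
  destruct (HL (i-j+t) t) as [_ [_ H3]]. by move: H3; rewrite /dok; case: (isCD _); case: (isCD _).
Qed.
End S.

Definition cl s := match s with sB => sA | s => s end.
Definition clsOf (r k d : bool) := if r then (if k then sC else sH) else if k then sV else if d then sD else sA.
Lemma cl_of a : cl a = clsOf (isCH a) (isCV a) (isCD a). Proof. by destruct a. Qed.

Lemma cl_x x (HL : LR x) i j : cl (x i j) = clsOf (isCH (x 0 j)) (isCV (x i 0)) (isCD (x (i-j) 0)).
Proof. rewrite cl_of rowCH // colCV // diagCD //. Qed.

Lemma det_right a a' b : cl a = cl a' -> hok a b = true -> hok a' b = true -> a = a'.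
Proof. by destruct a, a', b. Qed.
Lemma det_left a a' b : cl a = cl a' -> hok b a = true -> hok b a' = true -> a = a'.
Proof. by destruct a, a', b. Qed.
Lemma det_up a a' b : cl a = cl a' -> vok a b = true -> vok a' b = true -> a = a'.
Proof. by destruct a, a', b. Qed.
Lemma det_down a a' b : cl a = cl a' -> vok b a = true -> vok b a' = true -> a = a'.
Proof. by destruct a, a', b. Qed.

Lemma unique x y : LR x -> LR y -> (forall i j, cl (x i j) = cl (y i j)) -> x 0 0 = y 0 0 ->
  forall i j, x i j = y i j.
Proof.
  intros Hx Hy Hc H00.
  have col : forall j, x 0 j = y 0 j.
  { apply Zall; [exact H00|]. intro j; split; intro E.
    - apply (det_down _ _ (x 0 j) (Hc _ _)); [apply Hx|]. rewrite E; apply Hy.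
    - apply (det_up _ _ (x 0 (j+1)) (Hc _ _)); [apply Hx|]. rewrite E; apply Hy. }
  intros i j. revert i. apply Zall; [apply col|]. intro i; split; intro E.
  - apply (det_left _ _ (x i j) (Hc _ _)); [apply Hx|]. rewrite E; apply Hy.
  - apply (det_right _ _ (x (i+1) j) (Hc _ _)); [apply Hx|]. rewrite E; apply Hy.
Qed.


Definition zof (c : bool * nat) : Z := if fst c then Z.of_nat (snd c) else - Z.of_nat (snd c).
Definition zcode (z : Z) : bool * nat := if (0 <=? z) then (true, Z.to_nat z) else (false, Z.to_nat (-z)).
Lemma zofK z : zof (zcode z) = z.
Proof. unfold zcode, zof. destruct (Z.leb_spec 0 z); simpl; lia. Qed.

Definition Code := (nat * (bool*nat) * nat)%type.
Definition memc (c : Code) (z : Z) : bool :=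
  match c with (t, a, n) => match t with 0%N => false | 1%N => z =? zof a
     | _ => (z - zof a) mod Z.of_nat n =? 0 end end.
Definition shiftc (c : Code) (s : Z) : Code := match c with (t,a,n) => (t, zcode (zof a - s), n) end.
Lemma memc_shift c s z : memc (shiftc c s) z = memc c (z + s).
Proof.
  destruct c as [[t a] n]; destruct t as [|[|t]]; simpl; rewrite ?zofK; auto.
  - destruct (Z.eqb_spec z (zof a - s)); destruct (Z.eqb_spec (z+s) (zof a)); auto; lia.
  - replace (z - (zof a - s)) with (z + s - zof a) by ring. reflexivity.
Qed.

Lemma zfamily (K : Z -> bool) i0 : K i0 = true ->
  (forall i t, K i = true -> K (i+t) = K (i0+t)) -> exists c, forall z, K z = memc c z.
Proof.
  intros H0 Hinv.
  set per := fun d => forall z, K (z+d) = K z.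
  have perK : forall i, K i = true -> per (i - i0).
  { intros i Hi z. replace (z + (i - i0)) with (i + (z - i0)) by ring.
    rewrite Hinv //. f_equal; ring. }
  have per_add : forall d e, per d -> per e -> per (d + e).
  { intros d e Hd He z. rewrite Z.add_assoc He Hd. reflexivity. }
  have per_neg : forall d, per d -> per (- d).
  { intros d Hd z. rewrite <- (Hd (z + - d)). f_equal; ring. }
  have per_mul : forall d, per d -> forall q, per (q * d).
  { intros d Hd. apply Zall. { intro z; f_equal; ring. }
    intro q; split; intro Hq.
    - replace ((q+1)*d) with (q*d + d) by ring. auto.
    - replace (q*d) with ((q+1)*d + - d) by ring. auto. }
  destruct (classic (exists i1, K i1 = true /\ i1 <> i0)) as [[i1 [Hi1 Hne]] | Hno].
  - set P := fun n => (0 < n)%coq_nat /\ per (Z.of_nat n).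
    have exP : exists n, P n.
    { exists (Z.to_nat (Z.abs (i1 - i0))). split; [lia|].
      rewrite Z2Nat.id; [|lia]. destruct (Z.abs_spec (i1 - i0)) as [[_ E]|[_ E]]; rewrite E; auto. }
    destruct (dec_inh_nat_subset_has_unique_least_element P (fun n => classic (P n)) exP)
      as [n0 [[[Hn0 Hpn0] Hmin] _]].
    exists (2%N, zcode i0, n0). intro z. simpl memc. rewrite zofK.
    set N := Z.of_nat n0.
    have HN : 0 < N by unfold N; lia.
    destruct (Z.eqb_spec ((z - i0) mod N) 0) as [E|E].
    + have Ez : z = i0 + ((z - i0)/N) * N.
      { have := Z.div_mod (z - i0) N ltac:(lia). rewrite E. lia. }
      rewrite Ez; unfold N; rewrite (per_mul _ Hpn0). exact H0.
    + destruct (K z) eqn:Kz; [exfalso|reflexivity].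
      have Hr := Z.mod_pos_bound (z - i0) N HN.
      have Hpr : per ((z - i0) mod N).
      { rewrite Z.mod_eq; [|lia]. replace (z - i0 - N * ((z - i0) / N)) with ((z-i0) + (- ((z-i0)/N)) * N) by ring.
        apply per_add; [apply perK; auto| apply per_mul; auto]. }
      have : (n0 <= Z.to_nat ((z - i0) mod N))%coq_nat.
      { apply Hmin. split; [lia|]. rewrite Z2Nat.id; [auto|lia]. }
      unfold N in *; lia.
  - exists (1%N, zcode i0, 0%N). intro z. simpl. rewrite zofK.
    destruct (Z.eqb_spec z i0); [subst; auto|].
    destruct (K z) eqn:E; auto. exfalso; apply Hno; eauto.
Qed.


Lemma symC a : isCH a = true -> isCV a = true -> a = sC. Proof. by destruct a. Qed.
Lemma CD_CHCV a : isCD a = true -> isCH a = isCV a. Proof. by destruct a. Qed.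
Lemma CH_CDCV a : isCH a = true -> isCD a = isCV a. Proof. by destruct a. Qed.
Lemma CV_CDCH a : isCV a = true -> isCD a = isCH a. Proof. by destruct a. Qed.
Lemma symH a : isCH a = true -> isCV a = false -> a = sH. Proof. by destruct a. Qed.
Lemma symV a : isCH a = false -> isCV a = true -> a = sV. Proof. by destruct a. Qed.
Lemma symD a : isCH a = false -> isCV a = false -> isCD a = true -> a = sD. Proof. by destruct a. Qed.
Lemma stepB a b : (a = sH \/ a = sB) -> vok a b = true -> isCD b = false -> b = sB.
Proof. by intros [->| ->]; destruct b. Qed.
Lemma stepA a b : (a = sV \/ a = sA) -> hok a b = true -> isCD b = false -> b = sA.
Proof. by intros [->| ->]; destruct b. Qed.
Lemma stepB' a b : (a = sD \/ a = sB) -> hok a b = true -> isCV b = false -> b = sB.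
Proof. by intros [->| ->]; destruct b. Qed.

Lemma walk (P : Z -> Prop) a : P (a+1) -> (forall z, P z -> P (z+1)) -> forall t : nat, P (a + 1 + Z.of_nat t).
Proof.
  intros H0 H t. induction t as [|t IH].
  - rewrite Z.add_0_r; auto.
  - rewrite Nat2Z.inj_succ -Z.add_1_r Z.add_assoc. auto.
Qed.

Lemma reach (P : Z -> Prop) a b : a < b -> P (a+1) -> (forall z, P z -> P (z+1)) -> P b.
Proof.
  intros Hab H0 H. have := walk P a H0 H (Z.to_nat (b - a - 1)).
  rewrite Z2Nat.id; [|lia]. replace (a + 1 + (b - a - 1)) with b by ring. auto.
Qed.

Section C.
Variable x : config sym.
Hypothesis HL : LR x.
Let R j := isCH (x 0 j).
Let K i := isCV (x i 0).
Let Dl c := isCD (x c 0).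

Lemma diag_RK i j t : K i = true -> R j = true -> R (j+t) = K (i+t).
Proof.
  intros Hi Hj. unfold R, K in *.
  have HC : x i j = sC by apply symC; [rewrite rowCH|rewrite colCV].
  rewrite -(rowCH x HL (i+t)) -(colCV x HL _ (j+t)). apply CD_CHCV.
  rewrite diagCD //. replace (i + t - (j + t)) with (i - j) by ring.
  rewrite -diagCD // HC //.
Qed.

Lemma Dl_R j0 c : R j0 = true -> Dl c = K (c + j0).
Proof.
  intro Hj. unfold R, K, Dl in *.
  have E := diagCD x HL (c + j0) j0. replace (c + j0 - j0) with c in E by ring.
  rewrite -E -(colCV x HL _ j0). apply CH_CDCV. rewrite rowCH //.
Qed.

Lemma Dl_K i0 c : K i0 = true -> Dl c = R (i0 - c).
Proof.
  intro Hi. unfold R, K, Dl in *.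
  have E := diagCD x HL i0 (i0 - c). replace (i0 - (i0 - c)) with c in E by ring.
  rewrite -E -(rowCH x HL i0). apply CV_CDCH. rewrite colCV //.
Qed.

Lemma twoH j0 j1 : (forall i, K i = false) -> R j0 = true -> R j1 = true -> j0 < j1 -> False.
Proof.
  intros HK H0 H1 Hlt.
  have noD : forall j, isCD (x 0 j) = false.
  { intro j. rewrite diagCD // -/(Dl _) (Dl_R j0) //. }
  have : x 0 j1 = sB.
  { apply (reach (fun j => x 0 j = sB) j0 j1 Hlt).
    - apply (stepB (x 0 j0)); [left|apply HL|apply noD].
      apply symH; [exact H0| rewrite colCV //; apply HK].
    - intros z Hz. apply (stepB (x 0 z)); [right; auto|apply HL|apply noD]. }
  intro E. unfold R in H1. rewrite E in H1. discriminate.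
Qed.

Lemma twoV i0 i1 : (forall j, R j = false) -> K i0 = true -> K i1 = true -> i0 < i1 -> False.
Proof.
  intros HR H0 H1 Hlt.
  have noD : forall i, isCD (x i 0) = false.
  { intro i. rewrite -/(Dl _) (Dl_K i0) //. }
  have : x i1 0 = sA.
  { apply (reach (fun i => x i 0 = sA) i0 i1 Hlt).
    - apply (stepA (x i0 0)); [left|apply HL|apply noD].
      apply symV; [rewrite rowCH //; apply HR| exact H0].
    - intros z Hz. apply (stepA (x z 0)); [right; auto|apply HL|apply noD]. }
  intro E. unfold K in H1. rewrite E in H1. discriminate.
Qed.

Lemma twoD c1 c2 : (forall j, R j = false) -> (forall i, K i = false) -> Dl c1 = true -> Dl c2 = true -> c1 < c2 -> False.
Proof.
  intros HR HK H0 H1 Hlt.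
  have : x c2 0 = sB.
  { apply (reach (fun i => x i 0 = sB) c1 c2 Hlt).
    - apply (stepB' (x c1 0)); [left|apply HL|apply HK].
      apply symD; [rewrite rowCH //; apply HR| apply HK| exact H0].
    - intros z Hz. apply (stepB' (x z 0)); [right; auto|apply HL|apply HK]. }
  intro E. unfold Dl in H1. rewrite E in H1. discriminate.
Qed.

Lemma classify : exists c1 c2 c3, (forall j, R j = memc c1 j) /\ (forall i, K i = memc c2 i) /\ (forall c, Dl c = memc c3 c).
Proof.
  have single : forall (P : Z -> bool) z0, P z0 = true -> (forall a b, P a = true -> P b = true -> a < b -> False) ->
      forall z, P z = memc (1%N, zcode z0, 0%N) z.
  { intros P z0 Hz0 Hno z. simpl. rewrite zofK. destruct (Z.eqb_spec z z0); [subst; auto|].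
    destruct (P z) eqn:E; auto. exfalso. destruct (Z.lt_total z z0) as [h|[h|h]]; [|lia|]; eauto. }
  have empty : forall (P : Z -> bool), ~ (exists z, P z = true) -> forall z, P z = memc (0%N, zcode 0, 0%N) z.
  { intros P HP z. simpl. destruct (P z) eqn:E; auto. exfalso; eauto. }
  destruct (classic (exists j0, R j0 = true)) as [[j0 Hj0]|HR];
  destruct (classic (exists i0, K i0 = true)) as [[i0 Hi0]|HK].
  - destruct (zfamily K i0 Hi0) as [cK HcK].
    { intros i t Hi. rewrite -(diag_RK i j0 t) // (diag_RK i0 j0 t) //. }
    exists (shiftc cK (i0 - j0)), cK, (shiftc cK j0). split; [|split]; auto.
    + intro z. rewrite memc_shift -HcK. have := diag_RK i0 j0 (z - j0) Hi0 Hj0.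
      replace (j0 + (z - j0)) with z by ring. replace (i0 + (z - j0)) with (z + (i0 - j0)) by ring. auto.
    + intro c. rewrite memc_shift -HcK. apply Dl_R; auto.
  - have HK' : forall i, K i = false by intro i; destruct (K i) eqn:E; auto; exfalso; eauto.
    exists (1%N, zcode j0, 0%N), (0%N, zcode 0, 0%N), (0%N, zcode 0, 0%N). split; [|split].
    + apply single; auto. intros a b Ha Hb Hab. exact (twoH a b HK' Ha Hb Hab).
    + apply empty; auto.
    + intro c. rewrite (Dl_R j0) //.
  - have HR' : forall j, R j = false by intro j; destruct (R j) eqn:E; auto; exfalso; eauto.
    exists (0%N, zcode 0, 0%N), (1%N, zcode i0, 0%N), (0%N, zcode 0, 0%N). split; [|split].
    + apply empty; auto.
    + apply single; auto. intros a b Ha Hb Hab. exact (twoV a b HR' Ha Hb Hab).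
    + intro c. rewrite (Dl_K i0) //.
  - have HK' : forall i, K i = false by intro i; destruct (K i) eqn:E; auto; exfalso; eauto.
    have HR' : forall j, R j = false by intro j; destruct (R j) eqn:E; auto; exfalso; eauto.
    destruct (classic (exists c, Dl c = true)) as [[c0 Hc0]|HD].
    + exists (0%N, zcode 0, 0%N), (0%N, zcode 0, 0%N), (1%N, zcode c0, 0%N). split; [|split].
      * apply empty; auto.
      * apply empty; auto.
      * apply single; auto. intros a b Ha Hb Hab. exact (twoD a b HR' HK' Ha Hb Hab).
    + exists (0%N, zcode 0, 0%N), (0%N, zcode 0, 0%N), (0%N, zcode 0, 0%N). split; [|split]; apply empty; auto.
Qed.
End C.


Definition Tt := (Code * Code * Code * sym)%type.
Definition matches (t : Tt) (x : config sym) : Prop := match t with (c1,c2,c3,s) =>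
  (forall j, isCH (x 0 j) = memc c1 j) /\ (forall i, isCV (x i 0) = memc c2 i) /\
  (forall c, isCD (x c 0) = memc c3 c) /\ x 0 0 = s end.
Definition fenum (n : nat) : config sym :=
  match @unpickle Tt n with
  | Some t => epsilon (inhabits (fun _ _ : Z => sC)) (fun y => LR y /\ matches t y)
  | None => fun _ _ => sC end.

Lemma countableX : countable_set (in_SFT Fb).
Proof.
  exists fenum. intros x Hx. have HL := SFT_LR x Hx.
  destruct (classify x HL) as [c1 [c2 [c3 [H1 [H2 H3]]]]].
  exists (pickle ((c1,c2,c3,x 0 0) : Tt)). unfold fenum. rewrite pickleK.
  set y := epsilon _ _.
  have [Hy Hm] : LR y /\ matches (c1,c2,c3,x 0 0) y.
  { apply epsilon_spec. exists x. split; [exact HL|]. repeat split; auto. }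
  destruct Hm as [G1 [G2 [G3 G4]]]. intros i j. apply unique; auto.
  intros i' j'. rewrite !cl_x //. rewrite G1 G2 G3 H1 H2 H3. reflexivity.
Qed.


Definition succm m r := if r + 1 =? m then 0 else r + 1.
Definition gsym r s := if r =? 0 then (if s =? 0 then sC else sV) else if s =? 0 then sH
  else if r =? s then sD else if r <? s then sA else sB.
Definition grid (m : Z) : config sym := fun i j => gsym (i mod m) (j mod m).

Lemma mod_succ m i : 0 < m -> (i+1) mod m = succm m (i mod m).
Proof.
  intro Hm. rewrite -Z.add_mod_idemp_l; [|lia]. unfold succm.
  have := Z.mod_pos_bound i m Hm. set r := i mod m. intro Hr.
  destruct (Z.eqb_spec (r+1) m) as [E|E].
  - rewrite E Z.mod_same; lia.
  - apply Z.mod_small; lia.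
Qed.

Ltac zcases := repeat match goal with
 | |- context [Z.eqb ?a ?b] => destruct (Z.eqb_spec a b)
 | |- context [Z.ltb ?a ?b] => destruct (Z.ltb_spec a b)
 end.

Lemma grid_LR m : 0 < m -> LR (grid m).
Proof.
  intros Hm i j. unfold grid. rewrite !mod_succ //.
  have := Z.mod_pos_bound i m Hm. have := Z.mod_pos_bound j m Hm.
  set r := i mod m. set s := j mod m. intros Hs Hr.
  unfold gsym, succm. destruct (Z.eqb_spec (r+1) m); destruct (Z.eqb_spec (s+1) m); (split; [|split]); zcases; first [reflexivity | exfalso; lia].
Qed.


Lemma gsym_C r s : gsym r s = sC -> r = 0.
Proof. unfold gsym; zcases; try discriminate; auto. Qed.
Lemma gsym_H r s : gsym r s = sH -> r <> 0.
Proof. unfold gsym; zcases; try discriminate; auto. Qed.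

Lemma grid_periodic m : 0 < m -> periodic (grid m).
Proof.
  intro Hm. exists m, m. split; [lia|split; [lia|]]. intros i j; unfold grid; split.
  - replace (i + m) with (i + 1*m) by ring. rewrite Z_mod_plus_full. reflexivity.
  - replace (j + m) with (j + 1*m) by ring. rewrite Z_mod_plus_full. reflexivity.
Qed.

Lemma grid_diff a b : 0 < a < b -> grid a a 0 <> grid b a 0.
Proof.
  intros H E. unfold grid in E. rewrite Z.mod_same in E; [|lia].
  rewrite (Z.mod_small a b) in E; [|lia]. rewrite !Z.mod_0_l in E; [|lia|lia].
  revert E; unfold gsym; zcases; try discriminate; lia.
Qed.

Definition cellpat (M : Z) : pattern sym :=
  ((0,0),sC) :: ((M,0),sC) :: List.map (fun k => ((Z.of_nat k, 0), sH)) (List.seq 1 (Z.to_nat (M - 1))).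

Lemma cell_in M : 0 < M -> occurs (cellpat M) (grid M).
Proof.
  intro HM. exists 0, 0. intros e [<-|[<-|He]].
  - reflexivity.
  - cbn [fst snd]. unfold grid. rewrite !Z.add_0_r Z.mod_same; [|lia]. reflexivity.
  - apply in_map_iff in He as [k [<- Hk]]. apply List.in_seq in Hk.
    cbn [fst snd]. unfold grid. rewrite !Z.add_0_r Z.mod_0_l; [|lia].
    rewrite Z.mod_small. 2: lia. unfold gsym. zcases; try reflexivity; lia.
Qed.

Lemma cell_notin N M : 0 < N -> 0 < M -> N <> M -> ~ occurs (cellpat M) (grid N).
Proof.
  intros HN HM Hne [v1 [v2 Hocc]].
  have E0 := Hocc _ (or_introl erefl). have E1 := Hocc _ (or_intror (or_introl erefl)).
  cbn [fst snd] in E0, E1. rewrite Z.add_0_l in E0. unfold grid in E0, E1.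
  apply gsym_C in E0. apply gsym_C in E1.
  destruct (Z.lt_total M N) as [Hlt|[Heq|Hgt]]; [|lia|].
  - rewrite Z.add_mod in E1; [|lia]. rewrite E0 Z.add_0_r Z.mod_mod in E1; [|lia].
    rewrite Z.mod_small in E1; lia.
  - have : List.In ((Z.of_nat (Z.to_nat N), 0), sH) (cellpat M).
    { right; right. apply in_map_iff. exists (Z.to_nat N). split; [reflexivity|].
      apply List.in_seq. lia. }
    intro Hin. have E2 := Hocc _ Hin. cbn [fst snd] in E2. unfold grid in E2.
    apply gsym_H in E2. apply E2. rewrite Z2Nat.id; [|lia].
    rewrite Z.add_mod; [|lia]. rewrite Z.mod_same; [|lia]. rewrite E0. reflexivity.
Qed.

Theorem mainTheorem9 :
  exists (S : finType) (F : list (pattern S)),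
    countable_set (in_SFT F) /\
    (exists g : nat -> config S,
        (forall n, in_SFT F (g n) /\ periodic (g n)) /\
        (forall n m, n <> m -> ~ config_eq (g n) (g m))) /\
    (exists h : nat -> config S,
        (forall n, in_SFT F (h n)) /\
        (forall n m, n <> m -> ~ subpat (h n) (h m))).
Proof.
  exists sym, Fb. split; [exact countableX|split].
  - exists (fun n => grid (Z.of_nat n + 1)). split.
    + intro n. split; [apply LR_SFT, grid_LR; lia| apply grid_periodic; lia].
    + intros n m Hnm Heq. destruct (Nat.lt_total n m) as [h|[h|h]]; [|lia|].
      * apply (grid_diff (Z.of_nat n + 1) (Z.of_nat m + 1)); [lia|]. apply Heq.
      * apply (grid_diff (Z.of_nat m + 1) (Z.of_nat n + 1)); [lia|]. symmetry; apply Heq.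
  - exists (fun n => grid (Z.of_nat n + 1)). split.
    + intro n. apply LR_SFT, grid_LR; lia.
    + intros n m Hnm Hsub. apply (cell_notin (Z.of_nat n + 1) (Z.of_nat m + 1)); [lia|lia|lia|].
      apply Hsub, cell_in; lia.
Qed.
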